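(* Let $\phi\colon(\Gamma_1,X_1)\to(\Gamma_2,X_2)$ be a morphism in $\mathsf{SpatG}$. Define $\operatorname{Germ}(\phi)\colon\operatorname{Germ}(\Gamma_1,X_1)\to\operatorname{Germ}(\Gamma_2,X_2)$ by $\operatorname{Germ}(\phi)([\gamma,x])=[\gamma',\phi(x)]$, where $\gamma'\in\Gamma_2$ is any element with $\phi\circ\gamma=\gamma'\circ\phi$. Then $\operatorname{Germ}(\phi)$ is a well-defined étale homomorphism, and the assignments $(\Gamma,X)\mapsto\operatorname{Germ}(\Gamma,X)$, $\phi\mapsto\operatorname{Germ}(\phi)$ form a covariant functor $\mathsf{SpatG}\to\mathsf{Gpoid}$.
   Context: A Boolean space is a Hausdorff space with a basis of compact open sets; $\operatorname{Homeo}_c(X)$ is the set of homeomorphisms of $X$ whose support (closure of moved points) is compact open. The category $\mathsf{SpatG}$ has objects $(\Gamma,X)$ with $X$ Boolean and $\Gamma$ a subgroup of $\operatorname{Homeo}(X)$ contained in $\operatorname{Homeo}_c(X)$; a morphism $(\Gamma_1,X_1)\to(\Gamma_2,X_2)$ is a local homeomorphism $\phi\colon X_1\to X_2$ such that for each $\gamma\in\Gamma_1$ there is $\gamma'\in\Gamma_2$ with $\phi\circ\gamma=\gamma'\circ\phi$. The category $\mathsf{Gpoid}$ has objects ample (étale, unit space Hausdorff with basis of compact opens), effective (interior of isotropy equals unit space), Hausdorff groupoids, and morphisms étale homomorphisms (groupoid homomorphisms that are local homeomorphisms). The groupoid of germs $\operatorname{Germ}(\Gamma,X)$ is $\Gamma\times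 X$ modulo $(\gamma,x)\sim(\tau,y)$ iff $x=y$ and $\gamma,\tau$ agree near $x$; classes $[\gamma,x]$ with $s[\gamma,x]=x$, $r[\gamma,x]=\gamma(x)$, $[\tau,\gamma(x)][\gamma,x]=[\tau\gamma,x]$, $[\gamma,x]^{-1}=[\gamma^{-1},\gamma(x)]$, unit space $X$, topology with basis $\{[\gamma,x]:x\in A\}$ for $\gamma\in\Gamma$, $A$ open. *)

(* Defs.v *)
From HB Require Import structures.
From mathcomp Require Import all_boot all_order.
From mathcomp Require Import boolp classical_sets functions topology.

Set Implicit Arguments.
Unset Strict Implicit.
Unset Printing Implicit Defensive.

Local Open Scope classical_set_scope.

Definition boolean_space (X : topologicalType) : Prop :=
  hausdorff_space X /\
  (forall (x : X) (U : set X), open U -> U x ->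
     exists V : set X, [/\ open V, compact V, V x & V `<=` U]).

Definition is_homeo (X : topologicalType) (f : X -> X) : Prop :=
  exists g : X -> X, [/\ cancel f g, cancel g f, continuous f & continuous g].

Definition supp (X : topologicalType) (f : X -> X) : set X :=
  closure [set x | f x <> x].

Definition homeo_c (X : topologicalType) (f : X -> X) : Prop :=
  [/\ is_homeo f, compact (supp f) & open (supp f)].

Record spatG (X : topologicalType) := SpatG {
  sg_set : set (X -> X);
  sg_homeo_c : forall g, sg_set g -> homeo_c g;
  sg_id : sg_set id;
  sg_comp : forall g h, sg_set g -> sg_set h -> sg_set (g \o h);
  sg_inv : forall g, sg_set g -> exists h, [/\ sg_set h, cancel g h & cancel h g]
}.

Definition local_homeo (A B : topologicalType) (f : A -> B) : Prop :=
  forall a : A, exists U : set A,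
    [/\ open U, U a, open (f @` U) &
      exists g : B -> A,
        [/\ (forall y, U y -> g (f y) = y),
            (forall z, (f @` U) z -> f (g z) = z),
            {within U, continuous f} &
            {within f @` U, continuous g}]].

Definition spatG_hom (X1 X2 : topologicalType) (G1 : spatG X1) (G2 : spatG X2)
    (phi : X1 -> X2) : Prop :=
  local_homeo phi /\
  forall g, sg_set G1 g -> exists g', sg_set G2 g' /\ phi \o g = g' \o phi.

Section Germ.
Variables (X : topologicalType) (G : spatG X).

Definition gelt := {g : X -> X | sg_set G g}.

Definition germ_rel (p q : gelt * X) : Prop :=
  p.2 = q.2 /\ \forall y \near p.2, sval p.1 y = sval q.1 y.

(** Gamma x X modulo ~, as the type of equivalence classes *)
Definition germ := {S : set (gelt * X) | exists p, S = germ_rel p}.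

Definition gclass (g : gelt) (x : X) : germ :=
  exist _ (germ_rel (g, x)) (ex_intro _ (g, x) erefl).

Definition grep (a : germ) : gelt * X := projT1 (cid (proj2_sig a)).

Definition gel_id : gelt := exist _ id (sg_id G).
Definition gel_comp (a b : gelt) : gelt :=
  exist _ (sval a \o sval b) (sg_comp (proj2_sig a) (proj2_sig b)).
Definition gel_inv (a : gelt) : gelt :=
  let h := cid (sg_inv (proj2_sig a)) in
  exist _ (projT1 h) (let: And3 H _ _ := projT2 h in H).

(** s[g,x] = x, r[g,x] = g x, [t, g x][g, x] = [t g, x], [g,x]^-1 = [g^-1, g x],
    units x = [id, x] *)
Definition germ_src (a : germ) : X := (grep a).2.
Definition germ_rng (a : germ) : X := sval (grep a).1 (grep a).2.
Definition germ_unit (x : X) : germ := gclass gel_id x.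
Definition germ_mul (a b : germ) : germ :=
  gclass (gel_comp (grep a).1 (grep b).1) (grep b).2.
Definition germ_inv (a : germ) : germ :=
  gclass (gel_inv (grep a).1) (germ_rng a).

Definition germ_basic : set (set germ) :=
  [set B | exists (g : gelt) (A : set X), open A /\ B = gclass g @` A].

End Germ.

HB.instance Definition _ (X : topologicalType) (G : spatG X) :=
  gen_eqMixin (germ G).
HB.instance Definition _ (X : topologicalType) (G : spatG X) :=
  gen_choiceMixin (germ G).
(** the topology generated by the basic sets *)
HB.instance Definition _ (X : topologicalType) (G : spatG X) :=
  @isSubBaseTopological.Build (germ G) (set (germ G)) (@germ_basic X G) id.

Record gpd_ops (G X : Type) := GpdOps {
  gsrc : G -> X; grng : G -> X; gunit : X -> G;
  gmul : G -> G -> G; (* meaningful on composable pairs *)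
  ginv : G -> G }.

Definition is_groupoid (G X : Type) (o : gpd_ops G X) : Prop :=
  [/\ (forall x, gsrc o (gunit o x) = x /\ grng o (gunit o x) = x),
      (forall g h, gsrc o g = grng o h ->
         gsrc o (gmul o g h) = gsrc o h /\ grng o (gmul o g h) = grng o g),
      (forall g h k, gsrc o g = grng o h -> gsrc o h = grng o k ->
         gmul o (gmul o g h) k = gmul o g (gmul o h k)),
      (forall g, gmul o g (gunit o (gsrc o g)) = g /\
                 gmul o (gunit o (grng o g)) g = g) &
      (forall g, [/\ gsrc o (ginv o g) = grng o g, grng o (ginv o g) = gsrc o g,
                   gmul o (ginv o g) g = gunit o (gsrc o g) &
                   gmul o g (ginv o g) = gunit o (grng o g)])].

Definition topological_groupoid (G X : topologicalType) (o : gpd_ops G X) : Prop :=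
  [/\ continuous (gsrc o), continuous (grng o), continuous (gunit o),
      continuous (ginv o) &
      {within [set p : G * G | gsrc o p.1 = grng o p.2],
        continuous (fun p : G * G => gmul o p.1 p.2)}].

Definition etale_groupoid (G X : topologicalType) (o : gpd_ops G X) : Prop :=
  [/\ is_groupoid o, topological_groupoid o & local_homeo (gsrc o)].

Definition ample_groupoid (G X : topologicalType) (o : gpd_ops G X) : Prop :=
  etale_groupoid o /\ boolean_space X.

Definition effective_groupoid (G X : topologicalType) (o : gpd_ops G X) : Prop :=
  interior [set g | gsrc o g = grng o g] = range (gunit o).

Definition gpoid_obj (G X : topologicalType) (o : gpd_ops G X) : Prop :=
  [/\ ample_groupoid o, effective_groupoid o & hausdorff_space G].

Definition gpd_hom (G1 X1 G2 X2 : Type) (o1 : gpd_ops G1 X1) (o2 : gpd_ops G2 X2)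
    (F : G1 -> G2) : Prop :=
  forall g h, gsrc o1 g = grng o1 h ->
    gsrc o2 (F g) = grng o2 (F h) /\ F (gmul o1 g h) = gmul o2 (F g) (F h).

Definition etale_hom (G1 X1 G2 X2 : topologicalType)
    (o1 : gpd_ops G1 X1) (o2 : gpd_ops G2 X2) (F : G1 -> G2) : Prop :=
  gpd_hom o1 o2 F /\ local_homeo F.

Definition germ_gpd (X : topologicalType) (G : spatG X) : gpd_ops (germ G) X :=
  GpdOps (@germ_src X G) (@germ_rng X G) (@germ_unit X G) (@germ_mul X G)
         (@germ_inv X G).

Definition germ_map (X1 X2 : topologicalType) (G1 : spatG X1) (G2 : spatG X2)
    (phi : X1 -> X2) (a : germ G1) : germ G2 :=
  let p := grep a in
  match pselect (exists g' : gelt G2, phi \o sval p.1 = sval g' \o phi) with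
  | left h => gclass (projT1 (cid h)) (phi p.2)
  | right _ => gclass (gel_id G2) (phi p.2)
  end.
Arguments germ_map {X1 X2} G1 G2 phi%_function_scope a.

(* Main.v *)
Require Import Defs.
From HB Require Import structures.
From mathcomp Require Import all_boot all_order.
From mathcomp Require Import boolp classical_sets functions topology.

Local Open Scope classical_set_scope.

Module Helpers.
Set Implicit Arguments.
Unset Strict Implicit.
Unset Printing Implicit Defensive.

Section G1.
Variables (X : topologicalType) (G : spatG X).
Implicit Types (p q r : gelt G * X) (a b c : germ G) (g h : gelt G) (x y : X).

Lemma germ_eq (S1 S2 : germ G) : sval S1 = sval S2 -> S1 = S2.
Proof.
case: S1 S2 => S1 p1 [S2 p2] /= e; subst S2; congr exist; exact: Prop_irrelevance.
Qed.

Lemma germ_rel_refl p : germ_rel p p.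
Proof. by split=> //; apply: nearW. Qed.

Lemma germ_rel_sym p q : germ_rel p q -> germ_rel q p.
Proof. case=> e H; split=> //; rewrite -e; by apply: filterS H => y ->. Qed.

Lemma germ_rel_trans p q r : germ_rel p q -> germ_rel q r -> germ_rel p r.
Proof.
case=> e1 H1 [e2 H2]; split; first by rewrite e1.
rewrite -e1 in H2; by apply: filterS2 H1 H2 => y -> ->.
Qed.

Lemma gclass_eq g x h y :
  gclass g x = gclass h y <-> x = y /\ \forall z \near x, sval g z = sval h z.
Proof.
split.
  move=> /(congr1 sval) /= e.
  have : germ_rel (h, y) (g, x) by rewrite -e; exact: germ_rel_refl.
  by move/germ_rel_sym.
move=> H; apply: germ_eq => /=; apply/funext => q; apply/propext; split.
  by apply: germ_rel_trans; exact: germ_rel_sym.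
exact: germ_rel_trans.
Qed.

Lemma gclass_ext (g h : gelt G) x : sval g = sval h -> gclass g x = gclass h x.
Proof. by move=> e; apply/gclass_eq; split=> //; apply: nearW => z; rewrite e. Qed.

Lemma grepK a : gclass (grep a).1 (grep a).2 = a.
Proof.
apply: germ_eq => /=; rewrite /grep; case: cid => -[g x] /= e.
exact: (esym e).
Qed.

Lemma germ_ind a : exists g x, a = gclass g x.
Proof. by exists (grep a).1, (grep a).2; rewrite grepK. Qed.

Lemma grep_gclass g x : (grep (gclass g x)).2 = x /\
   \forall z \near x, sval (grep (gclass g x)).1 z = sval g z.
Proof.
have := grepK (gclass g x); move/gclass_eq => [e H]; split; first exact: e.
by move: H; rewrite e.
Qed.

Lemma gelt_cont (g : gelt G) : continuous (sval g).
Proof. by case: (sg_homeo_c (proj2_sig g)) => -[k [_ _ c _]]. Qed.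

Lemma germ_src_gclass g x : germ_src (gclass g x) = x.
Proof. by case: (grep_gclass g x). Qed.

Lemma germ_rng_gclass g x : germ_rng (gclass g x) = sval g x.
Proof.
rewrite /germ_rng; case: (grep_gclass g x) => -> H.
exact: nbhs_singleton H.
Qed.

End G1.

Section G2.
Variables (X : topologicalType) (G : spatG X).
Implicit Types (p q r : gelt G * X) (a b c : germ G) (g h : gelt G) (x y : X).

Lemma germ_nbhsE g x (W : set (germ G)) :
  nbhs (gclass g x) W <-> \forall y \near x, W (gclass g y).
Proof.
split.
  rewrite nbhsE => -[B [oB Ba] BW].
  move: oB Ba => [D' sD' eB]; rewrite -eB => -[C DC Ca]; have [F sF eC] := sD' _ DC.
  have : \forall y \near x, C (gclass g y).
    rewrite -eC; apply: filter_bigI => i iF.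
    have := sF _ iF; rewrite inE /= => -[k [A [oA ei]]].
    move: Ca; rewrite -eC => /(_ i) Hi.
    have {}Hi := Hi iF. rewrite /= ei in Hi *.
    case: Hi => y0 Ay0 /gclass_eq [<- H].
    have nA : nbhs y0 A by apply: open_nbhs_nbhs; split.
    apply: filterS2 nA (nbhs_interior H) => y Ay Hy.
    by exists y => //; apply/gclass_eq; split.
  by apply: filterS => y Cy; apply: BW; rewrite -eB; exists C.
move=> H; have : nbhs x [set y | W (gclass g y)] by exact: H.
rewrite (nbhsE x) => -[A [oA Ax] AW].
rewrite nbhsE; exists (gclass g @` A); last by move=> _ [y /AW Wy <-].
split; last by exists x.
exists [set gclass g @` A].
  move=> _ ->; apply: (@finI_from1 _ _ _ id); exists g, A; split => //.
by rewrite bigcup_set1.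
Qed.

Lemma gclass_cont g : continuous (gclass g).
Proof. by move=> x W /germ_nbhsE. Qed.

Lemma open_gclass g (A : set X) : open A -> open (gclass g @` A).
Proof.
move=> oA; rewrite openE => _ [y Ay <-]; apply/germ_nbhsE.
have nA : nbhs y A by apply: open_nbhs_nbhs; split.
by apply: filterS nA => z Az; exists z.
Qed.

Lemma germ_src_cont : continuous (@germ_src X G).
Proof.
move=> a; case: (germ_ind a) => g [x ->] U /=; rewrite germ_src_gclass => nU.
apply/germ_nbhsE; apply: filterS nU => y Uy /=; by rewrite germ_src_gclass.
Qed.

Lemma gel_invK g : cancel (sval g) (sval (gel_inv g)) /\ cancel (sval (gel_inv g)) (sval g).
Proof. by rewrite /gel_inv /=; case: cid => k [? ? ?]. Qed.

Lemma germ_mul_gclass g x h y : sval h y = x ->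
  germ_mul (gclass g x) (gclass h y) = gclass (gel_comp g h) y.
Proof.
move=> hyx; rewrite /germ_mul.
case: (grep_gclass g x) => e1 H1; case: (grep_gclass h y) => e2 H2.
apply/gclass_eq; split; first exact: e2.
rewrite e2; set p := grep (gclass g x) in H1 *.
rewrite -hyx in H1.
have H1' : \forall z \near y, sval p.1 (sval h z) = sval g (sval h z) :=
  @gelt_cont X G h y _ H1.
apply: filterS2 H1' H2 => z /= E1 E2.
by rewrite -E1; congr (sval p.1 _); exact: E2.
Qed.

Lemma germ_inv_gclass g x :
  germ_inv (gclass g x) = gclass (gel_inv g) (sval g x).
Proof.
rewrite /germ_inv germ_rng_gclass.
case: (grep_gclass g x) => e1 H1.
apply/gclass_eq; split => //.
set p := grep (gclass g x) in H1 *.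
set k := gel_inv g; have [gk kg] := gel_invK g.
have [pk kp] := gel_invK p.1.
rewrite -{1}(gk x) in H1.
have H1' : \forall z \near sval g x, sval p.1 (sval k z) = sval g (sval k z) :=
  @gelt_cont X G k (sval g x) _ H1.
apply: filterS H1' => z E.
by rewrite -{1}(kg z) -E pk.
Qed.

Lemma germ_unitE x : germ_unit G x = gclass (gel_id G) x.
Proof. by []. Qed.

End G2.

Section G3.
Variables (X : topologicalType) (G : spatG X).
Implicit Types (p q r : gelt G * X) (a b c : germ G) (g h : gelt G) (x y : X).

Lemma germ_is_groupoid : is_groupoid (germ_gpd G).
Proof.
split => /=.
- by move=> x; rewrite germ_unitE germ_src_gclass germ_rng_gclass.
- move=> a b; case: (germ_ind a) => g [x ->]; case: (germ_ind b) => h [y ->].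
  rewrite germ_src_gclass germ_rng_gclass => hy; subst x.
  by rewrite germ_mul_gclass // !germ_src_gclass !germ_rng_gclass.
- move=> a b c; case: (germ_ind a) => g [x ->]; case: (germ_ind b) => h [y ->].
  case: (germ_ind c) => k [z ->].
  rewrite !germ_src_gclass !germ_rng_gclass => hy kz; subst x y.
  rewrite germ_mul_gclass // germ_mul_gclass // germ_mul_gclass //.
  by rewrite germ_mul_gclass //; apply: gclass_ext.
- move=> a; case: (germ_ind a) => g [x ->].
  rewrite germ_src_gclass germ_rng_gclass !germ_unitE.
  by rewrite germ_mul_gclass // germ_mul_gclass //; split; apply: gclass_ext.
- move=> a; case: (germ_ind a) => g [x ->].
  have [gk kg] := gel_invK g.
  rewrite germ_inv_gclass !germ_src_gclass !germ_rng_gclass !germ_unitE.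
  split => //.
    by rewrite germ_mul_gclass // ; apply: gclass_ext; apply/funext => z; exact: gk.
  rewrite germ_mul_gclass ?kg //; apply: gclass_ext; apply/funext => z; exact: kg.
Qed.


Lemma germ_topological : topological_groupoid (germ_gpd G).
Proof.
split => /=.
- exact: germ_src_cont.
- move=> a; case: (germ_ind a) => g [x ->] U /=; rewrite germ_rng_gclass => nU.
  apply/germ_nbhsE; have : \forall y \near x, U (sval g y) := @gelt_cont X G g x _ nU.
  by apply: filterS => y Uy /=; rewrite germ_rng_gclass.
- by move=> x W; rewrite /= germ_unitE => /germ_nbhsE.
- move=> a; case: (germ_ind a) => g [x ->] W /=; rewrite germ_inv_gclass => /germ_nbhsE nW.
  apply/germ_nbhsE.
  have : \forall y \near x, W (gclass (gel_inv g) (sval g y)) := @gelt_cont X G g x _ nW.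
  by apply: filterS => y Wy /=; rewrite germ_inv_gclass.
apply/subspace_continuousP => -[a b] /=.
case: (germ_ind a) => g [x ->]; case: (germ_ind b) => h [y ->].
rewrite germ_src_gclass germ_rng_gclass => hy; subst x.
move=> W; rewrite /from_subspace /= germ_mul_gclass // => /germ_nbhsE nW.
have nQ : nbhs (gclass h y) (gclass h @` [set z | W (gclass (gel_comp g h) z)]).
  by apply/germ_nbhsE; apply: filterS nW => z Wz; exists z.
have nP : nbhs (gclass g (sval h y)) (range (gclass g)).
  by apply/germ_nbhsE; apply: nearW => z; exists z.
rewrite nbhs_simpl /within /=.
exists (range (gclass g), gclass h @` [set z | W (gclass (gel_comp g h) z)]) => //.
move=> -[c d] /= [[w _ <-] [z Wz <-]].
rewrite germ_src_gclass germ_rng_gclass => wz; subst w.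
by rewrite germ_mul_gclass.
Qed.


Lemma germ_src_local : local_homeo (@germ_src X G).
Proof.
move=> a; case: (germ_ind a) => g [x ->].
exists (range (gclass g)); split.
- exact: open_gclass openT.
- by exists x.
- have -> : @germ_src X G @` range (gclass g) = setT.
    apply/seteqP; split => // z _; exists (gclass g z); first by exists z.
    exact: germ_src_gclass.
  exact: openT.
exists (gclass g); split.
- by move=> _ [y _ <-]; rewrite germ_src_gclass.
- by move=> z _; rewrite germ_src_gclass.
- exact/continuous_subspaceT/germ_src_cont.
- exact/continuous_subspaceT/gclass_cont.
Qed.

Lemma germ_effective : effective_groupoid (germ_gpd G).
Proof.
rewrite /effective_groupoid /=; apply/seteqP; split.
  move=> a; case: (germ_ind a) => g [x ->]; rewrite /interior /= => /germ_nbhsE H.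
  exists x => //; rewrite germ_unitE; apply/gclass_eq; split => //.
  by apply: filterS H => y; rewrite /= germ_src_gclass germ_rng_gclass.

move=> _ [x _ <-]; rewrite /interior germ_unitE; apply/germ_nbhsE.
by apply: nearW => y /=; rewrite germ_src_gclass germ_rng_gclass.
Qed.

Lemma germ_hausdorff : hausdorff_space X -> hausdorff_space (germ G).
Proof.
move=> HX p q; case: (germ_ind p) => g [x ->]; case: (germ_ind q) => h [y ->].
move=> cl.
have xy : x = y.
  apply: HX => A B nA nB.
  have nA' : nbhs (gclass g x) (@germ_src X G @^-1` A).
    by apply/germ_nbhsE; apply: filterS nA => z Az /=; rewrite germ_src_gclass.
  have nB' : nbhs (gclass h y) (@germ_src X G @^-1` B).
    by apply/germ_nbhsE; apply: filterS nB => z Bz /=; rewrite germ_src_gclass.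
  by have [c [Ac Bc]] := cl _ _ nA' nB'; exists (germ_src c).
subst y.
set s := gel_comp (gel_inv g) h.
have [gk kg] := gel_invK g.
have sE z : sval s z = z <-> sval h z = sval g z.
  change (sval (gel_inv g) (sval h z) = z <-> sval h z = sval g z); split => E.
    by rewrite -[in RHS]E kg.
  by rewrite E gk.
case: (pselect (supp (sval s) x)) => hs; last first.
  have : \forall z \near x, sval s z = z.
    apply: contrapT => H; apply: hs => B nB.
    apply: contrapT => HB; apply: H; apply: filterS nB => z Bz.
    by apply: contrapT => mz; apply: HB; exists z.
  move=> H; apply/gclass_eq; split => //.
  by apply: filterS H => z /sE ->.
have [_ _ os] := sg_homeo_c (proj2_sig s).
have nV : nbhs x (supp (sval s)) by apply: open_nbhs_nbhs; split.
have nA : nbhs (gclass g x) (gclass g @` supp (sval s)).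
  by apply/germ_nbhsE; apply: filterS nV => z Vz; exists z.
have nB : nbhs (gclass h x) (gclass h @` supp (sval s)).
  by apply/germ_nbhsE; apply: filterS nV => z Vz; exists z.
have [c [[w Vw <-] [w' Vw' /gclass_eq [ew' H]]]] := cl _ _ nA nB.
subst w'.
have [z [mz ez]] := Vw _ H.
by exfalso; apply: mz; apply/sE.
Qed.

Lemma germ_gpoid_obj : boolean_space X -> gpoid_obj (germ_gpd G).
Proof.
move=> bX; split.
- split => //; split.
  + exact: germ_is_groupoid.
  + exact: germ_topological.
  + exact: germ_src_local.
- exact: germ_effective.
- by apply: germ_hausdorff; case: bX.
Qed.

End G3.

Definition nbhs_open (A B : topologicalType) (f : A -> B) : Prop :=
  forall x W, nbhs x W -> nbhs (f x) (f @` W).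

Definition hom_ex (X1 X2 : topologicalType) (G1 : spatG X1) (G2 : spatG X2)
    (phi : X1 -> X2) : Prop :=
  forall g, sg_set G1 g -> exists g', sg_set G2 g' /\ phi \o g = g' \o phi.

Lemma local_homeo_open (A B : topologicalType) (f : A -> B) :
  local_homeo f -> nbhs_open f.
Proof.
move=> lh x W nW.
have [U [oU Ux ofU [k [kK fK cf ck]]]] := lh x.
have /subspace_continuousP ck' := ck.
have fUx : (f @` U) (f x) by exists x.
have nWU : nbhs (k (f x)) (W `&` U).
  by rewrite kK //; apply: filterI => //; apply: open_nbhs_nbhs; split.
have := ck' (f x) fUx _ nWU.
move=> H0.
have H : \forall z \near f x, (f @` U) z -> (W `&` U) (k z) := H0.
have nfU : nbhs (f x) (f @` U) by apply: open_nbhs_nbhs; split.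
apply: filterS2 H nfU => z Hz fUz.
have [Wz Uz] := Hz fUz.
by exists (k z) => //; rewrite fK.
Qed.

Lemma nbhs_open_comp (A B C : topologicalType) (f : A -> B) (g : B -> C) :
  nbhs_open f -> nbhs_open g -> nbhs_open (g \o f).
Proof.
move=> hf hg x W nW; have := hg _ _ (hf _ _ nW).
by apply: filterS => _ [_ [w Ww <-] <-]; exists w.
Qed.

Lemma nbhs_open_id (A : topologicalType) : nbhs_open (@id A).
Proof. by move=> x W nW; rewrite image_id. Qed.

Lemma push_near (A B : topologicalType) (f : A -> B) (P : B -> Prop) x :
  nbhs_open f -> (\forall y \near x, P (f y)) -> \forall z \near f x, P z.
Proof.
move=> hf H; have := hf _ [set y | P (f y)] H.
by apply: filterS => _ [y Py <-].
Qed.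

Lemma hom_ex_comp (X1 X2 X3 : topologicalType) (G1 : spatG X1) (G2 : spatG X2)
    (G3 : spatG X3) (phi : X1 -> X2) (psi : X2 -> X3) :
  hom_ex G1 G2 phi -> hom_ex G2 G3 psi -> hom_ex G1 G3 (psi \o phi).
Proof.
move=> h1 h2 g sg; have [g' [sg' e1]] := h1 _ sg; have [g'' [sg'' e2]] := h2 _ sg'.
exists g''; split => //; apply/funext => x /=.
have := congr1 (@^~ x) e1; have := congr1 (@^~ (phi x)) e2; move=> /= <- <-.
by [].
Qed.

Lemma germ_map_spec (X1 X2 : topologicalType) (G1 : spatG X1) (G2 : spatG X2)
    (phi : X1 -> X2) (g : gelt G1) (g' : gelt G2) x :
  nbhs_open phi -> hom_ex G1 G2 phi -> phi \o sval g = sval g' \o phi ->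
  germ_map G1 G2 phi (gclass g x) = gclass g' (phi x).
Proof.
move=> ho he eg; rewrite /germ_map.
case: (grep_gclass g x) => e H.
set p := grep (gclass g x) in e H *.
case: pselect => [hex | hn]; last first.
  exfalso; have [k [sk ek]] := he _ (proj2_sig p.1); apply: hn.
  by exists (exist _ k sk).
case: cid => k /= ek.
apply/gclass_eq; split; first by rewrite e.
rewrite e; apply: push_near => //.
apply: filterS H => y Ey.
have := congr1 (@^~ y) ek; have := congr1 (@^~ y) eg; move=> /= E1 E2.
by rewrite -E2 -E1 Ey.
Qed.

Section M.
Variables (X1 X2 : topologicalType) (G1 : spatG X1) (G2 : spatG X2) (phi : X1 -> X2).
Hypothesis (lh : local_homeo phi) (he : hom_ex G1 G2 phi).

Let ho : nbhs_open phi := local_homeo_open lh.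

Lemma lift_gelt (g : gelt G1) : exists g' : gelt G2, phi \o sval g = sval g' \o phi.
Proof. have [k [sk ek]] := he (proj2_sig g); by exists (exist _ k sk). Qed.

Lemma germ_map_gpd_hom : gpd_hom (germ_gpd G1) (germ_gpd G2) (germ_map G1 G2 phi).
Proof.
move=> a b /=; case: (germ_ind a) => g [x ->]; case: (germ_ind b) => h [y ->].
rewrite germ_src_gclass germ_rng_gclass => hy; subst x.
have [g' eg] := lift_gelt g; have [h' eh] := lift_gelt h.
have ehy : sval h' (phi y) = phi (sval h y) by have := congr1 (@^~ y) eh.
rewrite (germ_map_spec _ _ _ eg) // (germ_map_spec _ _ _ eh) //.
rewrite germ_src_gclass germ_rng_gclass ehy; split => //.
rewrite germ_mul_gclass // germ_mul_gclass //.
apply: germ_map_spec => //; apply/funext => z /=.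
have := congr1 (@^~ (sval h z)) eg; have := congr1 (@^~ z) eh; move=> /= E1 E2.
by rewrite E2 E1.
Qed.

Lemma germ_map_local : local_homeo (germ_map G1 G2 phi).
Proof.
move=> a; case: (germ_ind a) => g [x ->].
have [U0 [oU0 U0x ofU0 [k [kK fK cf ck]]]] := lh x.
have [g' eg] := lift_gelt g.
have Fg y : germ_map G1 G2 phi (gclass g y) = gclass g' (phi y).
  exact: germ_map_spec.
have FU : germ_map G1 G2 phi @` (gclass g @` U0) = gclass g' @` (phi @` U0).
  apply/seteqP; split.
    by move=> _ [_ [y U0y <-] <-]; rewrite Fg; exists (phi y) => //; exists y.
  by move=> _ [_ [y U0y <-] <-]; exists (gclass g y); [exists y | rewrite Fg].
exists (gclass g @` U0); split.
- exact: open_gclass.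
- by exists x.
- by rewrite FU; apply: open_gclass.
exists (fun b => gclass g (k (germ_src b))); split.
- by move=> _ [y U0y <-]; rewrite Fg germ_src_gclass kK.
- rewrite FU => _ [_ [y U0y <-] <-].
  by rewrite germ_src_gclass kK // Fg.
- apply/subspace_continuousP => _ [y U0y <-] W.
  rewrite /from_subspace Fg => /germ_nbhsE nW.
  have cfy : {for y, continuous phi}.
    by move: cf; rewrite continuous_open_subspace // => /(_ y); apply; rewrite inE.
  have H : \forall w \near y, W (gclass g' (phi w)) := cfy _ nW.
  rewrite nbhs_simpl /within /=; apply/germ_nbhsE.
  by apply: filterS H => w Hw _ /=; rewrite Fg.
- rewrite FU; apply/subspace_continuousP => _ [_ [y U0y <-] <-] W.
  rewrite /from_subspace germ_src_gclass kK // => /germ_nbhsE nW.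
  have ofU0y : (phi @` U0) (phi y) by exists y.
  have cky : {for phi y, continuous k}.
    by move: ck; rewrite continuous_open_subspace // => /(_ (phi y)); apply; rewrite inE.
  have nW' : nbhs (k (phi y)) [set w | W (gclass g w)] by rewrite kK.
  have H : \forall z \near phi y, W (gclass g (k z)) := cky _ nW'.
  rewrite nbhs_simpl /within /=; apply/germ_nbhsE.
  by apply: filterS H => z Hz _ /=; rewrite germ_src_gclass.
Qed.

End M.
End Helpers.
Import Helpers.
Theorem proposition5p3 :
  (forall (X : topologicalType) (G : spatG X),
     boolean_space X -> gpoid_obj (germ_gpd G)) /\
  (forall (X1 X2 : topologicalType) (G1 : spatG X1) (G2 : spatG X2)
          (phi : X1 -> X2),
     boolean_space X1 -> boolean_space X2 -> spatG_hom G1 G2 phi ->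
     (forall (g : gelt G1) (g' : gelt G2) (x : X1),
        phi \o sval g = sval g' \o phi ->
        germ_map G1 G2 phi (gclass g x) = gclass g' (phi x)) /\
     etale_hom (germ_gpd G1) (germ_gpd G2) (germ_map G1 G2 phi)) /\
  (forall (X : topologicalType) (G : spatG X),
     boolean_space X -> germ_map G G id = id) /\
  (forall (X1 X2 X3 : topologicalType) (G1 : spatG X1) (G2 : spatG X2)
          (G3 : spatG X3) (phi : X1 -> X2) (psi : X2 -> X3),
     boolean_space X1 -> boolean_space X2 -> boolean_space X3 ->
     spatG_hom G1 G2 phi -> spatG_hom G2 G3 psi ->
     germ_map G1 G3 (psi \o phi) = germ_map G2 G3 psi \o germ_map G1 G2 phi).
Proof.
split; first by move=> X G; exact: germ_gpoid_obj.
split.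
  move=> X1 X2 G1 G2 phi _ _ [lh he]; split.
    by move=> g g' x; apply: germ_map_spec => //; exact: local_homeo_open.
  split; [exact: germ_map_gpd_hom | exact: germ_map_local].
split.
  move=> X G _; apply/funext => a; case: (germ_ind a) => g [x ->].
  apply: germ_map_spec => //; first exact: nbhs_open_id.
  by move=> k sk; exists k.
move=> X1 X2 X3 G1 G2 G3 phi psi _ _ _ [lh1 he1] [lh2 he2].
apply/funext => a; case: (germ_ind a) => g [x ->].
have [g' eg] := lift_gelt he1 g; have [g'' eg'] := lift_gelt he2 g'.
rewrite /= (germ_map_spec _ _ _ eg) //; last exact: local_homeo_open.
rewrite (germ_map_spec _ _ _ eg') //; last exact: local_homeo_open.
have E : (psi \o phi) \o sval g = sval g'' \o (psi \o phi).
  apply/funext => z /=.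
  have := congr1 (@^~ z) eg; have := congr1 (@^~ (phi z)) eg'; move=> /= E1 E2.
  by rewrite E2 E1.
apply: (germ_map_spec x _ _ E).
  by apply: nbhs_open_comp; exact: local_homeo_open.
exact: (hom_ex_comp he1 he2).
Qed.
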